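(* Let $(X,\leq)$ be a poset and $K$ a field, and let $FI(X,K)$ be the finitary incidence algebra of $X$ over $K$. The following conditions are equivalent: (1) $FI(X,K)$ satisfies a polynomial identity; (2) $FI(X,K)$ is Lie solvable; (3) $FI(X,K)$ is strongly Lie solvable; (4) the group of units $\mathcal{U}(FI(X,K))$ satisfies a group identity; (5) $\mathcal{U}(FI(X,K))$ is solvable; (6) $X$ is bounded.
   Context: The finitary incidence algebra $FI(X,K)$ is the $K$-vector space of formal sums $\alpha=\sum_{x\leq y}\alpha_{xy}e_{xy}$ ($x,y\in X$, $\alpha_{xy}\in K$) such that for every pair $x<y$ there are only finitely many $x\leq u<v\leq y$ with $\alpha_{uv}\neq 0$; the product is the convolution $\alpha\beta=\sum_{x\leq y}\big(\sum_{x\leq z\leq y}\alpha_{xz}\beta_{zy}\big)e_{xy}$, with identity $\delta=\sum_{x\in X}e_{xx}$. For a unital associative algebra $A$, with $[x,y]=xy-yx$ and, for subspaces $U,V$, $UV$ and $[U,V]$ the spans of products and commutators: the Lie derived series is $A^{[0]}=A$, $A^{[n+1]}=[A^{[n]},A^{[n]}]$, and $A$ is Lie solvable if $A^{[n]}=\{0\}$ for some $n$; the series $A^{(0)}=A$, $A^{(n+1)}=[A^{(n)},A^{(n)}]A$ defines strong Lie solvability: $A$ is strongly Lie solvable if $A^{(n)}=\{0\}$ for some $n$. The length of a finite chain $C\subseteq X$ is $|C|-1$; the length $l(X)$ of $X$ is the supremum of lengths of finite chains in $X$; $X$ is bounded if $l(X)<\infty$. A group satisfies a group identity if some nontrivial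 word $w(x_1,\dots,x_n)$ in a free group satisfies $w(g_1,\dots,g_n)=1$ for all elements $g_i$ of the group. *)

(* Defs.v *)
From mathcomp Require Import all_boot all_algebra.
From Stdlib Require Import ClassicalEpsilon.
From Stdlib Require List.

Set Implicit Arguments.
Unset Strict Implicit.
Unset Printing Implicit Defensive.

Import GRing.Theory.
Local Open Scope ring_scope.

Section FinitaryIncidence.
Variable K : fieldType.
Variable X : Type.
Variable le : X -> X -> Prop.

Definition lt (x y : X) : Prop := le x y /\ x <> y.

Definition is_poset : Prop :=
  (forall x, le x x) /\
  (forall x y, le x y -> le y x -> x = y) /\
  (forall x y z, le x y -> le y z -> le x z).

(** Ambient space of formal sums: all families (alpha_xy). *)
Definition mat := X -> X -> K.

(** Sum of a finitely supported family (0 if the support is infinite). *)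
Definition fsum {I : Type} (f : I -> K) : K :=
  match excluded_middle_informative
          (exists s : list I, List.NoDup s /\ forall i, f i <> 0 -> List.In i s) with
  | left H => \sum_(i <- proj1_sig (constructive_indefinite_description _ H)) f i
  | right _ => 0
  end.

Definition FI (a : mat) : Prop :=
  (forall x y, ~ le x y -> a x y = 0) /\
  (forall x y, lt x y ->
     exists s : list (X * X), forall u v,
       le x u -> lt u v -> le v y -> a u v <> 0 -> List.In (u, v) s).

Definition mzero : mat := fun _ _ => 0.
Definition madd (a b : mat) : mat := fun x y => a x y + b x y.
Definition mscale (k : K) (a : mat) : mat := fun x y => k * a x y.
(** Convolution; for a, b in FI the summand vanishes unless x <= z <= y. *)
Definition mmul (a b : mat) : mat := fun x y => fsum (fun z => a x z * b z y).
Definition mone : mat :=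
  fun x y => if excluded_middle_informative (x = y) then 1 else 0.
Definition mcomm (a b : mat) : mat := madd (mmul a b) (mscale (-1) (mmul b a)).

Inductive span (S : mat -> Prop) : mat -> Prop :=
  | span0 : span S mzero
  | spanS a : S a -> span S a
  | spanD a b : span S a -> span S b -> span S (madd a b)
  | spanZ k a : span S a -> span S (mscale k a).

(** A nonzero noncommutative polynomial in
    K<x_0, x_1, ...> is a nonempty list of (coefficient, monomial) pairs
    with pairwise distinct monomials and nonzero coefficients. *)
Definition mword (a : nat -> mat) (w : seq nat) : mat :=
  foldr (fun i acc => mmul (a i) acc) mone w.

Definition ncpoly_nonzero (f : seq (K * seq nat)) : bool :=
  [&& f != [::], uniq (map snd f) & all (fun p => p.1 != 0) f].

Definition ncpoly_eval (f : seq (K * seq nat)) (a : nat -> mat) : mat :=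
  foldr (fun p acc => madd (mscale p.1 (mword a p.2)) acc) mzero f.

Definition FI_PI : Prop :=
  exists f, ncpoly_nonzero f /\
    forall a : nat -> mat, (forall i, FI (a i)) -> ncpoly_eval f a = mzero.

Fixpoint lie_der (n : nat) : mat -> Prop :=
  match n with
  | 0 => FI
  | n'.+1 => span (fun c => exists a b, lie_der n' a /\ lie_der n' b /\ c = mcomm a b)
  end.

Definition FI_lie_solvable : Prop :=
  exists n, forall c, lie_der n c -> c = mzero.

Fixpoint slie_der (n : nat) : mat -> Prop :=
  match n with
  | 0 => FI
  | n'.+1 =>
      span (fun c => exists u a,
              span (fun d => exists p q, slie_der n' p /\ slie_der n' q /\ d = mcomm p q) u
              /\ FI a /\ c = mmul u a)
  end.

Definition FI_strongly_lie_solvable : Prop :=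
  exists n, forall c, slie_der n c -> c = mzero.

Definition inverse_pair (a b : mat) : Prop :=
  FI a /\ FI b /\ mmul a b = mone /\ mmul b a = mone.

Definition FI_unit (a : mat) : Prop := exists b, inverse_pair a b.

(** (4) Group identity.  A word in the free group on x_0, x_1, ... is a list
    of letters (i, false) = x_i, (i, true) = x_i^{-1}; it is nontrivial iff
    it is nonempty and reduced. *)
Fixpoint reduced_word (w : seq (nat * bool)) : bool :=
  match w with
  | p :: ((q :: _) as t) => ~~ ((p.1 == q.1) && (p.2 != q.2)) && reduced_word t
  | _ => true
  end.

(** Evaluation of a word: g i is the value of x_i and h i its inverse. *)
Definition gword (g h : nat -> mat) (w : seq (nat * bool)) : mat :=
  foldr (fun p acc => mmul (if p.2 then h p.1 else g p.1) acc) mone w.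

Definition units_group_identity : Prop :=
  exists w, w != [::] /\ reduced_word w /\
    forall g h : nat -> mat, (forall i, inverse_pair (g i) (h i)) ->
      gword g h w = mone.

Inductive gen_subgroup (S : mat -> Prop) : mat -> Prop :=
  | gs_one : gen_subgroup S mone
  | gs_base a : S a -> gen_subgroup S a
  | gs_mul a b : gen_subgroup S a -> gen_subgroup S b -> gen_subgroup S (mmul a b)
  | gs_inv a b : gen_subgroup S a -> inverse_pair a b -> gen_subgroup S b.

Fixpoint unit_der (n : nat) : mat -> Prop :=
  match n with
  | 0 => FI_unit
  | n'.+1 =>
      gen_subgroup (fun c => exists x y x' y',
        unit_der n' x /\ unit_der n' y /\ inverse_pair x x' /\ inverse_pair y y' /\
        c = mmul (mmul (mmul x' y') x) y)
  end.

Definition units_solvable : Prop :=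
  exists n, forall c, unit_der n c -> c = mone.

(** (6) Boundedness: finite chains (duplicate-free lists of pairwise
    comparable elements) have uniformly bounded length |C| - 1. *)
Definition poset_bounded : Prop :=
  exists N : nat, forall s : seq X,
    List.NoDup s ->
    (forall a b, List.In a s -> List.In b s -> le a b \/ le b a) ->
    ((size s).-1 <= N)%N.

End FinitaryIncidence.

(* Main.v *)
Require Import Defs.
From mathcomp Require Import all_boot all_algebra ring.
From Stdlib Require Import ClassicalEpsilon FunctionalExtensionality Classical.
From Stdlib Require List Permutation.

Set Implicit Arguments.
Unset Strict Implicit.
Unset Printing Implicit Defensive.
Import GRing.Theory.
Local Open Scope ring_scope.
Section Fsum.
Variable K : fieldType.

Lemma sum_perm (I : Type) (F : I -> K) s1 s2 :
  Permutation.Permutation s1 s2 -> \sum_(i <- s1) F i = \sum_(i <- s2) F i.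
Proof.
elim => [|x l l' _ IH|x y l|l l' l'' _ IH1 _ IH2].
- by [].
- by rewrite !big_cons IH.
- by rewrite !big_cons addrCA.
- by rewrite IH1 IH2.
Qed.

Lemma sum_filter_nz (I : Type) (F : I -> K) (s : seq I) :
  \sum_(i <- s) F i = \sum_(i <- [seq i <- s | F i != 0]) F i.
Proof.
elim: s => [|a s IH] //=.
rewrite big_cons IH; case: (eqVneq (F a) 0) => [E|E] /=.
- by rewrite E add0r.
- by rewrite big_cons.
Qed.

Lemma In_filter (I : Type) (p : pred I) (s : seq I) i :
  List.In i (filter p s) <-> List.In i s /\ p i.
Proof.
elim: s => [|a s IH] /=; first by split => [[]|[]].
case Hp: (p a) => /=.
- split.
  + case=> [<-|/IH [H1 H2]]; [by split; [left|]| by split; [right|]].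
  + case=> [[<-|H] H2]; [by left| right; apply/IH; by split].
- split.
  + by move/IH => [H1 H2]; split; [right|].
  + case=> [[<-|H] H2]; [by rewrite Hp in H2| by apply/IH; split].
Qed.

Lemma NoDup_filter' (I : Type) (p : pred I) (s : seq I) :
  List.NoDup s -> List.NoDup (filter p s).
Proof.
elim: s => [|a s IH] /=; first by [].
move=> H; inversion H; subst.
case: (p a) => /=; last by apply: IH.
constructor; last by apply: IH.
by move/In_filter => [].
Qed.

Lemma sum_nz_seq (I : Type) (F : I -> K) (s : seq I) :
  \sum_(i <- s) F i <> 0 -> exists i, List.In i s /\ F i <> 0.
Proof.
elim: s => [|a s IH]; first by rewrite big_nil.
rewrite big_cons => H.
case: (eqVneq (F a) 0) => [Ha|Ha].
- rewrite Ha add0r in H. have [i [H1 H2]] := IH H. by exists i; split; [right|].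
- by exists a; split; [left|apply/eqP].
Qed.

Lemma fsum_list (I : Type) (f : I -> K) (s : seq I) :
  List.NoDup s -> (forall i, f i <> 0 -> List.In i s) ->
  fsum f = \sum_(i <- s) f i.
Proof.
move=> nd cov; rewrite /fsum.
case: excluded_middle_informative => [H|H]; last first.
  by exfalso; apply: H; exists s.
case: (constructive_indefinite_description _ H) => s0 [nd0 cov0] /=.
rewrite (sum_filter_nz f s0) (sum_filter_nz f s).
apply: sum_perm; apply: Permutation.NoDup_Permutation.
- exact: NoDup_filter'.
- exact: NoDup_filter'.
- move=> x; rewrite !In_filter; split.
  + by case=> _ /eqP Hx; split; [apply: cov|apply/eqP].
  + by case=> _ /eqP Hx; split; [apply: cov0|apply/eqP].
Qed.

Lemma fsum0 (I : Type) (f : I -> K) : (forall i, f i = 0) -> fsum f = 0.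
Proof.
move=> H; rewrite (@fsum_list _ f [::]) ?big_nil //.
by constructor.
Qed.

Lemma fsum_nz (I : Type) (f : I -> K) : fsum f <> 0 -> exists i, f i <> 0.
Proof.
move=> H; apply: NNPP => H1; apply: H; apply: fsum0 => i.
by apply: NNPP => H2; apply: H1; exists i.
Qed.

Lemma fsum_single (I : Type) (f : I -> K) i0 :
  (forall i, i <> i0 -> f i = 0) -> fsum f = f i0.
Proof.
move=> H; rewrite (@fsum_list _ f [:: i0]).
- by rewrite big_cons big_nil addr0.
- by constructor; [case|constructor].
- move=> i Hi; left; apply: NNPP => H1; apply: Hi; apply: H => E; apply: H1; by rewrite E.
Qed.

Lemma fsum_ext (I : Type) (f g : I -> K) : (forall i, f i = g i) -> fsum f = fsum g.
Proof. by move=> H; rewrite (functional_extensionality f g H). Qed.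

Definition fsupp (I : Type) (f : I -> K) :=
  exists s : seq I, forall i, f i <> 0 -> List.In i s.

Lemma nodup_cover (I : Type) (s : seq I) :
  exists s', List.NoDup s' /\ forall i, List.In i s -> List.In i s'.
Proof.
pose dec := fun x y : I => excluded_middle_informative (x = y).
exists (List.nodup dec s); split; first exact: List.NoDup_nodup.
by move=> i Hi; apply/List.nodup_In.
Qed.

Lemma fsum_lin (I : Type) (f g : I -> K) k :
  fsupp f -> fsupp g -> fsum (fun i => f i + k * g i) = fsum f + k * fsum g.
Proof.
move=> [s1 H1] [s2 H2].
have [s [nd cov]] := nodup_cover (s1 ++ s2).
have cf : forall i, f i <> 0 -> List.In i s.
  by move=> i Hi; apply: cov; apply: List.in_or_app; left; apply: H1.
have cg : forall i, g i <> 0 -> List.In i s.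
  by move=> i Hi; apply: cov; apply: List.in_or_app; right; apply: H2.
rewrite (fsum_list nd cf) (fsum_list nd cg) (@fsum_list _ _ s nd).
- by rewrite big_split /= mulr_sumr.
- move=> i Hi; case: (eqVneq (f i) 0) => [E|/eqP E]; last by apply: cf.
  apply: cg => E'; apply: Hi; by rewrite E E' mulr0 addr0.
Qed.

Lemma mulf_nz (a b : K) : a * b <> 0 -> a <> 0 /\ b <> 0.
Proof. by move=> H; split => E; apply: H; rewrite E ?mul0r ?mulr0. Qed.

End Fsum.
Section Poset.
Variable X : Type.
Variable le : X -> X -> Prop.
Hypothesis Hpo : is_poset le.

Lemma le_refl x : le x x. Proof. by have [H _] := Hpo; apply: H. Qed.
Lemma le_anti x y : le x y -> le y x -> x = y. Proof. by have [_ [H _]] := Hpo; apply: H. Qed.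
Lemma le_trans x y z : le x y -> le y z -> le x z. Proof. by have [_ [_ H]] := Hpo; apply: H. Qed.

Fixpoint reach (k : nat) (x y : X) : Prop :=
  match k with
  | 0 => le x y
  | k'.+1 => exists z, lt le x z /\ reach k' z y
  end.

Lemma reach_le k x y : reach k x y -> le x y.
Proof.
elim: k x => [|k IH] x //= [z [[H1 _] H2]].
exact: le_trans H1 (IH _ H2).
Qed.

Lemma lt_le_lt x z w : le x z -> lt le z w -> lt le x w.
Proof.
move=> H [H1 H2]; split; first exact: le_trans H H1.
move=> E; subst; apply: H2; exact: le_anti.
Qed.

Lemma le_lt_lt x z w : lt le x z -> le z w -> lt le x w.
Proof.
move=> [H1 H2] H; split; first exact: le_trans H1 H.
move=> E; subst; apply: H2; exact: le_anti.
Qed.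

Lemma reach_lelt k x z y : le x z -> reach k z y -> reach k x y.
Proof.
case: k => [|k] /= H.
- exact: le_trans.
- by case=> w [H1 H2]; exists w; split => //; exact: lt_le_lt H H1.
Qed.

Lemma reach_trans j k x z y : reach j x z -> reach k z y -> reach (j + k) x y.
Proof.
elim: j x => [|j IH] x /=.
- move=> H1 H2; exact: reach_lelt H1 H2.
- by case=> w [H1 H2] H3; exists w; split => //; apply: IH H2 H3.
Qed.

Lemma reach_down k x y : reach k.+1 x y -> reach k x y.
Proof.
elim: k x => [|k IH] x /=.
- case=> z [[H1 _] H2]; exact: le_trans H1 H2.
- by case=> z [H1 H2]; exists z; split => //; apply: IH.
Qed.

Lemma reach_mono j k x y : (j <= k)%N -> reach k x y -> reach j x y.
Proof.
move=> /subnKC <-; elim: (k - j)%N => [|d IH]; first by rewrite addn0.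
by rewrite addnS => /reach_down.
Qed.

Lemma reach_split j k x y : reach (j + k) x y -> exists z, reach j x z /\ reach k z y.
Proof.
elim: j x => [|j IH] x /=.
- move=> H; exists x; split => //; exact: le_refl.
- case=> w [H1 /IH [z [H2 H3]]]; exists z; split => //; by exists w.
Qed.

Lemma reach_lt k x y : reach k.+1 x y -> lt le x y.
Proof. case=> z [H1 H2]; exact: le_lt_lt H1 (reach_le H2). Qed.

Lemma reach_irr k x : ~ reach k.+1 x x.
Proof. by move/reach_lt => [_]. Qed.

Lemma lt_reach1 x y : lt le x y -> reach 1 x y.
Proof. move=> H; exists y; split => //; exact: le_refl. Qed.

Lemma size_app (l1 l2 : seq X) : size (l1 ++ l2)%list = (size l1 + size l2)%N.
Proof. by elim: l1 => //= a l IH; rewrite IH. Qed.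

Lemma reach_chain k x y : reach k x y ->
  exists s : seq X, [/\ List.NoDup s, size s = k.+1,
    (forall a b, List.In a s -> List.In b s -> le a b \/ le b a) &
    (forall e, List.In e s -> le x e)].
Proof.
elim: k x => [|k IH] x /=.
- move=> _; exists [:: x]; split => //.
  + by constructor; [case|constructor].
  + by move=> a b [<-|[]] [<-|[]]; left; apply: le_refl.
  + by move=> e [<-|[]]; apply: le_refl.
- case=> w [Hxw /IH [s [nd sz cmp ge]]].
  exists (x :: s); split => //=.
  + constructor => // Hx; case: Hxw => H1 H2; apply: H2; apply: le_anti H1 _; exact: ge.
  + by rewrite sz.
  + move=> a b [<-|Ha] [<-|Hb]; try (by left; apply: le_refl).
    * left; apply: le_trans (proj1 Hxw) (ge _ Hb).
    * right; apply: le_trans (proj1 Hxw) (ge _ Ha).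
    * exact: cmp.
  + move=> e [<-|He]; first exact: le_refl.
    apply: le_trans (proj1 Hxw) (ge _ He).
Qed.

Lemma bounded_noreach : poset_bounded le -> exists N, forall x y, ~ reach N x y.
Proof.
case=> N HN; exists N.+1 => x y /reach_chain [s [nd sz cmp _]].
have := HN s nd cmp; by rewrite sz /= ltnn.
Qed.

Lemma min_exists (s : seq X) : s <> [::] ->
  (forall a b, List.In a s -> List.In b s -> le a b \/ le b a) ->
  exists m, List.In m s /\ forall e, List.In e s -> le m e.
Proof.
elim: s => [|a s IH] // _ cmp.
case: s IH cmp => [|b s] IH cmp.
- exists a; split; first by left.
  by move=> e [<-|[]]; apply: le_refl.
- have Hne : b :: s <> [::] by [].
  have cmp' : forall u v, List.In u (b :: s) -> List.In v (b :: s) -> le u v \/ le v u.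
    by move=> u v Hu Hv; apply: cmp; right.
  have [m [Hm1 Hm2]] := IH Hne cmp'.
  have [H|H] := cmp a m (or_introl erefl) (or_intror Hm1).
  + exists a; split; first by left.
    move=> e [<-|He]; first exact: le_refl.
    exact: le_trans H (Hm2 _ He).
  + exists m; split; first by right.
    by move=> e [<-|He]; [|apply: Hm2].
Qed.



Lemma chain_reach k (s : seq X) : List.NoDup s -> size s = k.+1 ->
  (forall a b, List.In a s -> List.In b s -> le a b \/ le b a) ->
  exists x y, List.In x s /\ reach k x y.
Proof.
elim: k s => [|k IH] s nd sz cmp.
- case: s sz nd cmp => [|a s] // _ _ _; exists a, a; split; [by left|exact: le_refl].
- have [|m [Hm1 Hm2]] := min_exists _ cmp; first by case: s sz nd cmp.
  have [l1 [l2 E]] := List.in_split _ _ Hm1; subst s.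
  have [nd' nin] := List.NoDup_remove _ _ _ nd.
  have sz' : size (l1 ++ l2)%list = k.+1.
    move: sz; rewrite !size_app /= addnS; by case.
  have inc : forall a, List.In a (l1 ++ l2)%list -> List.In a (l1 ++ m :: l2)%list.
    move=> a Ha; have [H|H] := List.in_app_or _ _ _ Ha; apply: List.in_or_app; [by left|by right; right].
  have cmp' : forall a b, List.In a (l1 ++ l2)%list -> List.In b (l1 ++ l2)%list -> le a b \/ le b a.
    by move=> a b Ha Hb; apply: cmp; apply: inc.
  have [x [y [Hx Hxy]]] := IH _ nd' sz' cmp'.
  exists m, y; split => //; exists x; split => //; split; first by apply: Hm2; apply: inc.
  by move=> E; subst; apply: nin.
Qed.

Lemma unbounded_reach : ~ poset_bounded le -> forall k, exists x y, reach k x y.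
Proof.
move=> Hb k; apply: NNPP => Hk; apply: Hb; exists k => s nd cmp.
case Es: (size s) => [|j] //=.
case: (leqP j k) => // Hkj; exfalso; apply: Hk.
have [x [y [_ H]]] := chain_reach nd Es cmp.
exists x, y; apply: reach_mono H; exact: ltnW.
Qed.

Lemma reach_fun k x y : reach k x y ->
  exists c : nat -> X, c 0%N = x /\ forall i, (i < k)%N -> lt le (c i) (c i.+1).
Proof.
elim: k x => [|k IH] x /=.
- by move=> _; exists (fun _ => x).
- case=> w [H1 /IH [c [c0 Hc]]].
  exists (fun i => if i is i'.+1 then c i' else x); split => // [[|i]] /= Hi.
  + by rewrite c0.
  + exact: Hc.
Qed.

End Poset.
Section Alg.
Variable K : fieldType.
Variable X : Type.
Variable le : X -> X -> Prop.
Hypothesis Hpo : is_poset le.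

Local Notation M := (mat K X).
Local Notation lt := (lt le).
Local Notation le_refl := (le_refl Hpo).
Local Notation le_anti := (le_anti Hpo).
Local Notation le_trans := (le_trans Hpo).

Definition supp (a : M) := forall x y, a x y <> 0 -> le x y.

Lemma FI_supp (a : M) : FI le a -> supp a.
Proof. move=> [H _] x y Hne; apply: NNPP => Hl; apply: Hne; exact: H. Qed.

Lemma mone_eq x : (@mone K X) x x = 1.
Proof. by rewrite /mone; case: excluded_middle_informative. Qed.

Lemma mone_neq x y : x <> y -> (@mone K X) x y = 0.
Proof. by rewrite /mone; case: excluded_middle_informative. Qed.

Lemma mone_nz x y : (@mone K X) x y <> 0 -> x = y.
Proof. by move=> H; apply: NNPP => E; apply: H; apply: mone_neq. Qed.

Lemma meq (a b : M) : (forall x y, a x y = b x y) -> a = b.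
Proof.
move=> H; apply: functional_extensionality => x; apply: functional_extensionality => y.
exact: H.
Qed.

Lemma mmul_nz (a b : M) x y : mmul a b x y <> 0 -> exists z, a x z <> 0 /\ b z y <> 0.
Proof. by move/fsum_nz => [z /mulf_nz Hz]; exists z. Qed.

Lemma supp_mmul (a b : M) : supp a -> supp b -> supp (mmul a b).
Proof. move=> Ha Hb x y /mmul_nz [z [H1 H2]]; exact: le_trans (Ha _ _ H1) (Hb _ _ H2). Qed.

Lemma supp_mone : supp ((@mone K X)).
Proof. by move=> x y /mone_nz ->; apply: le_refl. Qed.

Lemma FI_mone : FI le ((@mone K X)).
Proof.
split.
- move=> x y Hl; apply: mone_neq => E; subst; apply: Hl; exact: le_refl.
- move=> x y _; exists [::] => u v _ [_ Huv] _ H; exfalso; apply: H; exact: mone_neq.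
Qed.

Lemma mmul_1r (a : M) : mmul a ((@mone K X)) = a.
Proof.
apply: meq => x y; rewrite /mmul (@fsum_single _ _ _ y).
- by rewrite mone_eq mulr1.
- by move=> z Hz; rewrite mone_neq // mulr0.
Qed.

Lemma mmul_1l (a : M) : mmul ((@mone K X)) a = a.
Proof.
apply: meq => x y; rewrite /mmul (@fsum_single _ _ _ x).
- by rewrite mone_eq mul1r.
- by move=> z Hz; rewrite mone_neq ?mul0r // => E; apply: Hz.
Qed.

Lemma mmul_diag (a b : M) x : supp a -> supp b -> mmul a b x x = a x x * b x x.
Proof.
move=> Ha Hb; rewrite /mmul (@fsum_single _ _ _ x) // => z Hz.
apply: NNPP => /mulf_nz [H1 H2]; apply: Hz; apply: le_anti (Hb _ _ H2) (Ha _ _ H1).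
Qed.

Lemma cover_r (a : M) : FI le a -> forall x y, exists s, List.NoDup s /\
  forall z, a x z <> 0 -> le z y -> List.In z s.
Proof.
move=> [Hs Hf] x y.
case: (classic (lt x y)) => Hxy.
- have [L HL] := Hf _ _ Hxy.
  have [s [nd cov]] := nodup_cover (x :: [seq p.2 | p <- L]).
  exists s; split => // z Hz Hzy; apply: cov.
  case: (classic (z = x)) => [->|Hzx]; first by left.
  right; have Hin := HL x z (le_refl x) _ Hzy Hz.
  have /Hin : lt x z.
    split; last by move=> E; apply: Hzx.
    apply: NNPP => Hl; apply: Hz; exact: Hs.
  move=> Hin'; exact: (List.in_map snd L (x, z) Hin').
- exists [:: x]; split; first by constructor; [case|constructor].
  move=> z Hz Hzy; left; apply: NNPP => Hzx; apply: Hxy.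
  have Hxz : le x z by apply: NNPP => Hl; apply: Hz; exact: Hs.
  have Hxz' : lt x z by split => // E; apply: Hzx; rewrite E.
  exact: (le_lt_lt Hpo Hxz' Hzy).
Qed.

Lemma cover_l (a : M) : FI le a -> forall x y, exists s, List.NoDup s /\
  forall w, a w y <> 0 -> le x w -> List.In w s.
Proof.
move=> [Hs Hf] x y.
case: (classic (lt x y)) => Hxy.
- have [L HL] := Hf _ _ Hxy.
  have [s [nd cov]] := nodup_cover (y :: [seq p.1 | p <- L]).
  exists s; split => // w Hw Hxw; apply: cov.
  case: (classic (w = y)) => [->|Hwy]; first by left.
  right; have Hin := HL w y Hxw _ (le_refl y) Hw.
  have /Hin : lt w y.
    split => //. apply: NNPP => Hl; apply: Hw; exact: Hs.
  move=> Hin'; exact: (List.in_map fst L (w, y) Hin').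
- exists [:: y]; split; first by constructor; [case|constructor].
  move=> w Hw Hxw; left; apply: NNPP => Hwy; apply: Hxy.
  have Hwy' : le w y by apply: NNPP => Hl; apply: Hw; exact: Hs.
  have Hwy'' : lt w y by split => // E; apply: Hwy; rewrite E.
  exact: (lt_le_lt Hpo Hxw Hwy'').
Qed.

Lemma prod_fsupp (a b : M) x y : FI le a -> supp b -> fsupp (fun z => a x z * b z y).
Proof.
move=> Ha Hb; have [s [_ Hs]] := cover_r Ha x y.
exists s => z /mulf_nz [H1 H2]; apply: Hs => //; exact: Hb.
Qed.

Lemma mmul_distr (a b c : M) k : FI le a -> supp b -> supp c ->
  mmul a (madd b (mscale k c)) = madd (mmul a b) (mscale k (mmul a c)).
Proof.
move=> Ha Hb Hc; apply: meq => x y; rewrite /mmul /madd /mscale.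
rewrite -fsum_lin; try exact: prod_fsupp.
apply: fsum_ext => z; by rewrite mulrDr mulrCA.
Qed.

Lemma mmul_assoc (a b c : M) : FI le a -> FI le b -> FI le c ->
  mmul (mmul a b) c = mmul a (mmul b c).
Proof.
move=> Ha Hb Hc; have Sb := FI_supp Hb; have Sa := FI_supp Ha; have Sc := FI_supp Hc.
apply: meq => x y.
have [sz [ndz Hz]] := cover_r Ha x y.
have [sw [ndw Hw]] := cover_l Hc x y.
rewrite /mmul.
have E1 : forall w, fsum (fun z => a x z * b z w) * c w y =
                    (\sum_(z <- sz) a x z * b z w) * c w y.
  move=> w; case: (eqVneq (c w y) 0) => [->|/eqP Hcw]; first by rewrite !mulr0.
  congr (_ * _); apply: fsum_list => // z /mulf_nz [H1 H2].
  apply: Hz => //; exact: le_trans (Sb _ _ H2) (Sc _ _ Hcw).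
have E2 : forall z, a x z * fsum (fun w => b z w * c w y) =
                    a x z * (\sum_(w <- sw) b z w * c w y).
  move=> z; case: (eqVneq (a x z) 0) => [->|/eqP Haz]; first by rewrite !mul0r.
  congr (_ * _); apply: fsum_list => // w /mulf_nz [H1 H2].
  apply: Hw => //; exact: le_trans (Sa _ _ Haz) (Sb _ _ H1).
rewrite (fsum_ext E1) (fsum_ext E2).
rewrite (@fsum_list _ _ _ sw) //; last first.
  move=> w /mulf_nz [/sum_nz_seq [z [_ /mulf_nz [H1 H2]]] H3].
  apply: Hw => //; exact: le_trans (Sa _ _ H1) (Sb _ _ H2).
rewrite (@fsum_list _ _ _ sz) //; last first.
  move=> z /mulf_nz [H1 /sum_nz_seq [w [_ /mulf_nz [H2 H3]]]].
  apply: Hz => //; exact: le_trans (Sb _ _ H2) (Sc _ _ H3).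
under eq_bigr do rewrite mulr_suml.
rewrite exchange_big /=; apply: eq_bigr => z _.
rewrite mulr_sumr; apply: eq_bigr => w _; by rewrite mulrA.
Qed.

Lemma FI_mmul (a b : M) : FI le a -> FI le b -> FI le (mmul a b).
Proof.
move=> Ha Hb; have Sa := FI_supp Ha; have Sb := FI_supp Hb.
split.
- move=> x y Hl; apply: NNPP => H; apply: Hl; exact: supp_mmul H.
- move=> x y Hxy.
  have [La HLa] := proj2 Ha _ _ Hxy.
  have [Lb HLb] := proj2 Hb _ _ Hxy.
  exists (La ++ Lb ++ [seq (pq.1.1, pq.2.2) | pq <- List.list_prod La Lb])%list.
  move=> u v Hxu Huv Hvy /mmul_nz [z [H1 H2]].
  have Huz := Sa _ _ H1; have Hzv := Sb _ _ H2.
  case: (classic (u = z)) => [E|Nuz].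
    subst z; apply: List.in_or_app; right; apply: List.in_or_app; left.
    exact: HLb.
  case: (classic (z = v)) => [E|Nzv].
    subst z; apply: List.in_or_app; left; exact: HLa.
  apply: List.in_or_app; right; apply: List.in_or_app; right.
  have P1 : List.In (u, z) La.
    by apply: (HLa u z Hxu _ (le_trans Hzv Hvy) H1); split.
  have P2 : List.In (z, v) Lb.
    by apply: (HLb z v (le_trans Hxu Huz) _ Hvy H2); split.
  exact: (List.in_map (fun pq : (X * X) * (X * X) => (pq.1.1, pq.2.2)) _ ((u, z), (z, v))
            (List.in_prod _ _ _ _ P1 P2)).
Qed.

End Alg.
Section Filt.
Variable K : fieldType.
Variable X : Type.
Variable le : X -> X -> Prop.
Hypothesis Hpo : is_poset le.

Local Notation M := (mat K X).
Local Notation one := (@mone K X).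
Local Notation lt := (lt le).
Local Notation reach := (reach le).
Local Notation reach_le := (reach_le Hpo).
Local Notation reach_mono := (reach_mono Hpo).
Local Notation reach_split := (reach_split Hpo).
Local Notation reach_lt := (reach_lt Hpo).
Local Notation lt_reach1 := (lt_reach1 Hpo).
Local Notation reach_irr := (reach_irr Hpo).
Local Notation reach_lelt := (reach_lelt Hpo).
Local Notation mmul_diag := (mmul_diag Hpo).
Local Notation supp_mmul := (supp_mmul Hpo).
Local Notation FI_mone := (FI_mone K Hpo).
Local Notation mmul_distr := (mmul_distr Hpo).
Local Notation mmul_assoc := (mmul_assoc Hpo).
Local Notation FI_mmul := (FI_mmul Hpo).
Local Notation supp_mone := (@supp_mone K X le Hpo).

Definition Pk (k : nat) (a : M) := forall x y, a x y <> 0 -> reach k x y.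

Lemma Pk_supp k (a : M) : Pk k a -> supp le a.
Proof. by move=> H x y /H /reach_le; apply. Qed.

Lemma supp_P0 (a : M) : supp le a -> Pk 0 a.
Proof. by []. Qed.

Lemma Pk_zero k : Pk k ((@mzero K X)).
Proof. by move=> x y; rewrite /mzero. Qed.

Lemma madd_nz (a b : M) x y : madd a b x y <> 0 -> a x y <> 0 \/ b x y <> 0.
Proof.
rewrite /madd => H; case: (eqVneq (a x y) 0) => [E|/eqP E]; last by left.
by right; rewrite E add0r in H.
Qed.

Lemma mscale_nz k (a : M) x y : mscale k a x y <> 0 -> a x y <> 0.
Proof. by rewrite /mscale => /mulf_nz []. Qed.

Lemma Pk_add k (a b : M) : Pk k a -> Pk k b -> Pk k (madd a b).
Proof. by move=> Ha Hb x y /madd_nz [/Ha|/Hb]. Qed.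

Lemma Pk_scale k c (a : M) : Pk k a -> Pk k (mscale c a).
Proof. by move=> Ha x y /mscale_nz /Ha. Qed.

Lemma Pk_mul j k (a b : M) : Pk j a -> Pk k b -> Pk (j + k) (mmul a b).
Proof.
move=> Ha Hb x y H; have [z [H1 H2]] := mmul_nz H.
exact: (reach_trans Hpo (Ha _ _ H1) (Hb _ _ H2)).
Qed.

Lemma Pk_span k S (a : M) : (forall b, S b -> Pk k b) -> Defs.span S a -> Pk k a.
Proof.
move=> HS Hs; elim: Hs => [|b /HS //|b c _ Hb _ Hc|c b _ Hb].
- exact: Pk_zero.
- exact: Pk_add.
- exact: Pk_scale.
Qed.

Lemma Pk_comm k (a b : M) : Pk k a -> Pk k b -> Pk k.+1 (mcomm a b).
Proof.
move=> Ha Hb x y H.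
case: (classic (x = y)) => [E|Nxy].
  subst y; exfalso; apply: H; rewrite /mcomm /madd /mscale.
  rewrite !mmul_diag; try exact: Pk_supp Ha; try exact: Pk_supp Hb.
  by rewrite mulrC mulN1r subrr.
have Hr : reach (k + k) x y.
  move: H; rewrite /mcomm => /madd_nz [H|/mscale_nz H].
  - exact: Pk_mul Ha Hb _ _ H.
  - exact: Pk_mul Hb Ha _ _ H.
case: k Ha Hb Hr => [|k] Ha Hb Hr.
- apply: lt_reach1; split => //.
- apply: reach_mono Hr; by rewrite addSn ltnS leq_addl.
Qed.

Lemma mmul_noreach k (c W : M) x y : supp le c -> Pk k W -> ~ reach k.+1 x y ->
  mmul c W x y = c x x * W x y.
Proof.
move=> Hc HW Hn; rewrite /mmul (@fsum_single _ _ _ x) // => z Hz.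
apply: NNPP => /mulf_nz [H1 /HW H2]; apply: Hn; exists z; split => //.
split; [exact: Hc| by move=> E; apply: Hz].
Qed.

Lemma Pk_comm3 k (a b Z : M) : supp le a -> supp le b -> Pk k Z ->
  Pk k.+1 (madd (mmul a (mmul b Z)) (mscale (-1) (mmul b (mmul a Z)))).
Proof.
move=> Ha Hb HZ x y H; apply: NNPP => Hn; apply: H.
have HbZ : Pk k (mmul b Z) by exact: (Pk_mul (j:=0) Hb HZ).
have HaZ : Pk k (mmul a Z) by exact: (Pk_mul (j:=0) Ha HZ).
rewrite /madd /mscale.
rewrite (mmul_noreach Ha HbZ Hn) (mmul_noreach Hb HaZ Hn).
rewrite (mmul_noreach Hb HZ Hn) (mmul_noreach Ha HZ Hn).
ring.
Qed.

Lemma noreach_zero N (a : M) : (forall x y, ~ reach N x y) -> Pk N a -> a = (@mzero K X).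
Proof.
move=> HN Ha; apply: meq => x y; rewrite /mzero; apply: NNPP => H.
exact: HN (Ha _ _ H).
Qed.

Lemma slie_Pk n (c : M) : slie_der le n c -> Pk n c.
Proof.
elim: n c => [|n IH] c /=.
- move/FI_supp; exact.
- apply: Pk_span => d [u [a [Hu [Ha ->]]]].
  rewrite -(addn0 n.+1); apply: Pk_mul; last by apply: supp_P0; exact: FI_supp.
  apply: Pk_span Hu => e [p [q [Hp [Hq ->]]]].
  by apply: Pk_comm; apply: IH.
Qed.

Lemma lie_slie n (c : M) : lie_der le n c -> slie_der le n c.
Proof.
elim: n c => [|n IH] c //= Hc.
elim: Hc => [|b [p [q [Hp [Hq ->]]]]|b d _ Hb _ Hd|k b _ Hb].
- exact: span0.
- apply: spanS; exists (mcomm p q), one; split; last split.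
  + apply: spanS; exists p, q; split; [exact: IH|split; [exact: IH|by []]].
  + exact: FI_mone.
  + by rewrite mmul_1r.
- exact: spanD.
- exact: spanZ.
Qed.

Definition Em (i j : X) : M :=
  fun x y => if excluded_middle_informative (x = i /\ y = j) then 1 else 0.

Lemma Em_nz i j x y : Em i j x y <> 0 -> x = i /\ y = j.
Proof. by rewrite /Em; case: excluded_middle_informative. Qed.

Lemma Em_ij i j : Em i j i j = 1.
Proof. rewrite /Em; case: excluded_middle_informative => // H; exfalso; exact: H. Qed.

Lemma Em_neq i j x y : ~ (x = i /\ y = j) -> Em i j x y = 0.
Proof. by rewrite /Em; case: excluded_middle_informative. Qed.

Lemma FI_Em i j : le i j -> FI le (Em i j).
Proof.
move=> Hij; split.
- move=> x y Hl; apply: NNPP => /Em_nz [E1 E2]; apply: Hl; by rewrite E1 E2.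
- move=> x y _; exists [:: (i, j)] => u v _ _ _ /Em_nz [E1 E2]; left; by rewrite E1 E2.
Qed.

Lemma Em_comm i j k : i <> k -> mcomm (Em i j) (Em j k) = Em i k.
Proof.
move=> Nik; apply: meq => x y; rewrite /mcomm /madd /mscale.
have -> : mmul (Em j k) (Em i j) x y = 0.
  apply: fsum0 => z; apply: NNPP => /mulf_nz [/Em_nz [_ E1] /Em_nz [E2 _]].
  by apply: Nik; rewrite -E1 -E2.
rewrite mulr0 addr0 /mmul (@fsum_single _ _ _ j).
- case: (classic (x = i)) => [->|Nx]; last first.
    rewrite (@Em_neq i j x j); last by move=> [E _]; apply: Nx.
    rewrite (@Em_neq i k x y); last by move=> [E _]; apply: Nx.
    by rewrite mul0r.
  rewrite Em_ij; case: (classic (y = k)) => [->|Ny]; first by rewrite !Em_ij mulr1.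
  rewrite (@Em_neq j k j y); last by move=> [_ E]; apply: Ny.
  rewrite (@Em_neq i k i y); last by move=> [_ E]; apply: Ny.
  by rewrite mulr0.
- move=> z Hz; apply: NNPP => /mulf_nz [/Em_nz [_ E] _]; by apply: Hz.
Qed.

Lemma lie_Em n i k : reach (2 ^ n) i k -> lie_der le n (Em i k).
Proof.
elim: n i k => [|n IH] i k /=.
- move=> [z [[H1 _] H2]]; apply: FI_Em; exact: (le_trans Hpo H1 H2).
- rewrite expnS mul2n -addnn => /reach_split [j [H1 H2]].
  have p0 : (0 < 2 ^ n)%N by rewrite expn_gt0.
  have L1 : lt i j by move: H1; rewrite -(ltn_predK p0) => /reach_lt.
  have L2 : lt j k by move: H2; rewrite -(ltn_predK p0) => /reach_lt.
  have Nik : i <> k.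
    move=> E; subst k; case: L1 => A1 A2; case: L2 => B1 B2; apply: A2.
    exact: (le_anti Hpo A1 B1).
  rewrite -(Em_comm j Nik); apply: spanS; exists (Em i j), (Em j k); split; last split.
  + exact: IH.
  + exact: IH.
  + by [].
Qed.

Section PI.
Variable a : nat -> M.
Hypothesis Ha : forall i, FI le (a i).

Definition Ww (w : seq nat) (Z : M) : M := foldr (fun i acc => mmul (a i) acc) Z w.
Definition Tt (f : seq (K * seq nat)) (Z : M) : M :=
  foldr (fun p acc => madd (mscale p.1 (Ww p.2 Z)) acc) ((@mzero K X)) f.

Lemma Ww_cat w v Z : Ww (w ++ v) Z = Ww w (Ww v Z).
Proof. by rewrite /Ww foldr_cat. Qed.

Lemma Tt_cat f g Z : Tt (f ++ g) Z = madd (Tt f Z) (Tt g Z).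
Proof.
elim: f => [|p f IH] /=; first by apply: meq => x y; rewrite /madd /mzero add0r.
rewrite IH; apply: meq => x y; rewrite /madd; ring.
Qed.

Lemma Tt_map f v Z : Tt [seq (p.1, p.2 ++ v) | p <- f] Z = Tt f (Ww v Z).
Proof. elim: f => [|p f IH] //=; by rewrite IH Ww_cat. Qed.

Lemma Tt_mapN f v Z :
  Tt [seq (- p.1, p.2 ++ v) | p <- f] Z = mscale (-1) (Tt f (Ww v Z)).
Proof.
elim: f => [|p f IH] /=; first by apply: meq => x y; rewrite /mscale /mzero mulr0.
rewrite IH Ww_cat; apply: meq => x y; rewrite /madd /mscale; ring.
Qed.

Lemma supp_Ww w Z : supp le Z -> supp le (Ww w Z).
Proof.
move=> HZ; elim: w => [|i w IH] //=; apply: supp_mmul => //; exact: FI_supp.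
Qed.

Lemma Pk_Ww k w Z : Pk k Z -> Pk k (Ww w Z).
Proof.
move=> HZ; elim: w => [|i w IH] //=; rewrite -(add0n k); apply: Pk_mul => //.
apply: supp_P0; exact: FI_supp.
Qed.

Lemma Ww_lin w Y Z : supp le Y -> supp le Z ->
  Ww w (madd Y (mscale (-1) Z)) = madd (Ww w Y) (mscale (-1) (Ww w Z)).
Proof.
move=> HY HZ; elim: w => [|i w IH] //=.
rewrite IH mmul_distr //; [exact: supp_Ww|exact: supp_Ww].
Qed.

Lemma Tt_lin f Y Z : supp le Y -> supp le Z ->
  Tt f (madd Y (mscale (-1) Z)) = madd (Tt f Y) (mscale (-1) (Tt f Z)).
Proof.
move=> HY HZ; elim: f => [|p f IH] /=.
  by apply: meq => x y; rewrite /madd /mscale /mzero; ring.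
rewrite IH Ww_lin //; apply: meq => x y; rewrite /madd /mscale; ring.
Qed.

Lemma Pk_Tt k f Z : Pk k Z -> Pk k (Tt f Z).
Proof.
move=> HZ; elim: f => [|p f IH] /=; first exact: Pk_zero.
apply: Pk_add => //; apply: Pk_scale; exact: Pk_Ww.
Qed.

End PI.

Fixpoint fpoly (n : nat) : seq (K * seq nat) :=
  match n with
  | 0 => [:: (1, [::])]
  | n'.+1 => [seq (p.1, p.2 ++ [:: n'.*2; n'.*2.+1]) | p <- fpoly n'] ++
             [seq (- p.1, p.2 ++ [:: n'.*2.+1; n'.*2]) | p <- fpoly n']
  end.

Lemma fpoly_P (a : nat -> M) (Ha : forall i, FI le (a i)) n j Z :
  Pk j Z -> Pk (j + n) (Tt a (fpoly n) Z).
Proof.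
elim: n j Z => [|n IH] j Z HZ /=.
  rewrite addn0; apply: Pk_add; [apply: Pk_scale; exact: HZ|exact: Pk_zero].
rewrite Tt_cat Tt_map Tt_mapN -Tt_lin //; try (apply: supp_Ww => //; exact: Pk_supp HZ).
rewrite -addSnnS; apply: IH; rewrite /Ww /=.
apply: Pk_comm3 => //; exact: FI_supp.
Qed.

Lemma cat_inj_r (w1 w2 v : seq nat) : w1 ++ v = w2 ++ v -> w1 = w2.
Proof.
move=> E; have Hs : size w1 = size w2.
  by move/(congr1 size): E; rewrite !size_cat => /addIn.
by rewrite -(take_size_cat v (erefl (size w1))) E take_size_cat.
Qed.

Lemma map_snd_fp (c : K -> K) (f : seq (K * seq nat)) v :
  [seq q.2 | q <- [seq (c p.1, p.2 ++ v) | p <- f]] = [seq w ++ v | w <- [seq p.2 | p <- f]].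
Proof. by elim: f => //= p f ->. Qed.

Lemma fpoly_nonzero n : ncpoly_nonzero (fpoly n).
Proof.
rewrite /ncpoly_nonzero; elim: n => [|n IH] /=; first by rewrite oner_eq0.
move/and3P: IH => [Hne Hu Hc]; apply/and3P; split.
- by case: (fpoly n) Hne.
- rewrite map_cat (map_snd_fp id) (map_snd_fp (fun x => - x)) cat_uniq; apply/and3P; split.
  + by rewrite (map_inj_uniq (fun w1 w2 => @cat_inj_r w1 w2 _)).
  + apply/hasPn => w /mapP [w2 _ ->]; apply/negP => /mapP [w1 _ E].
    move/(congr1 (last 0%N)): E; rewrite !last_cat /= => E.
    by move/(congr1 odd): E; rewrite /= !odd_double.
  + by rewrite (map_inj_uniq (fun w1 w2 => @cat_inj_r w1 w2 _)).
- rewrite all_cat !all_map; apply/andP; split; apply/allP => p Hp /=.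
  + exact: (allP Hc p Hp).
  + rewrite oppr_eq0; exact: (allP Hc p Hp).
Qed.


Definition Qk k (a : M) := forall x y, a x y <> one x y -> reach k x y.

Lemma Q_one k : Qk k one.
Proof. by []. Qed.

Lemma Q_diag k (a : M) x : Qk k.+1 a -> a x x = 1.
Proof.
move=> Ha; apply: NNPP => H; apply: (reach_irr (Ha x x _)); by rewrite mone_eq.
Qed.

Lemma Q_off k (a : M) x y : Qk k a -> x <> y -> a x y <> 0 -> reach k x y.
Proof. by move=> Ha Nxy H; apply: Ha; rewrite mone_neq. Qed.

Lemma Q_supp k (a : M) : Qk k a -> supp le a.
Proof.
move=> Ha x y H; case: (classic (x = y)) => [->|Nxy]; first exact: le_refl.
exact: reach_le (Q_off Ha Nxy H).
Qed.

Lemma Q_mul k (a b : M) : Qk k.+1 a -> Qk k.+1 b -> Qk k.+1 (mmul a b).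
Proof.
move=> Ha Hb x y H; apply: NNPP => Hn; apply: H.
rewrite /mmul (@fsum_single _ _ _ x).
- rewrite (Q_diag _ Ha) mul1r; apply: NNPP => Hb'; exact: Hn (Hb _ _ Hb').
- move=> z Hz; apply: NNPP => /mulf_nz [H1 H2]; apply: Hn.
  have R1 : reach k.+1 x z by apply: Q_off Ha _ H1 => E; apply: Hz.
  case: (classic (z = y)) => [E|Nzy]; first by rewrite -E.
  have R2 := Q_off Hb Nzy H2.
  apply: reach_mono (reach_trans Hpo R1 R2); exact: leq_addr.
Qed.

Lemma madd_neg_nz (b c : M) x y : b x y <> c x y -> madd b (mscale (-1) c) x y <> 0.
Proof.
move=> H; rewrite /madd /mscale => E; apply: H; apply/eqP; rewrite -subr_eq0.
by rewrite -mulN1r E.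
Qed.

Lemma Q_inv k (a b : M) : Qk k a -> inverse_pair le a b -> Qk k b.
Proof.
move=> Ha [Fa [Fb [Hab Hba]]] x y H.
have E : madd b (mscale (-1) one) = mmul b (madd one (mscale (-1) a)).
  by rewrite (mmul_distr (-1) Fb supp_mone (FI_supp Fa)) mmul_1r Hba.
have H0 := madd_neg_nz H; rewrite E in H0; have [z [H1 H2]] := mmul_nz H0.
have H3 : a z y <> one z y.
  move=> E'; apply: H2; rewrite /madd /mscale E'; ring.
exact: (reach_lelt (FI_supp Fb H1) (Ha _ _ H3)).
Qed.

Lemma Q_comm1 (x y x' y' : M) : inverse_pair le x x' -> inverse_pair le y y' ->
  Qk 1 (mmul (mmul (mmul x' y') x) y).
Proof.
move=> [Fx [Fx' [_ Hx]]] [Fy [Fy' [_ Hy]]] u v H.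
have Sx := FI_supp Fx; have Sy := FI_supp Fy; have Sx' := FI_supp Fx'; have Sy' := FI_supp Fy'.
have S1 : supp le (mmul x' y') by apply: supp_mmul.
have S2 : supp le (mmul (mmul x' y') x) by apply: supp_mmul.
case: (classic (u = v)) => [E|Nuv].
  subst v; exfalso; apply: H; rewrite mone_eq !mmul_diag //.
  have ex : x' u u * x u u = 1 by rewrite -mmul_diag // Hx mone_eq.
  have ey : y' u u * y u u = 1 by rewrite -mmul_diag // Hy mone_eq.
  transitivity ((x' u u * x u u) * (y' u u * y u u)); first by ring.
  by rewrite ex ey mulr1.
apply: lt_reach1; split => //; apply: (supp_mmul S2 Sy); by rewrite mone_neq in H.
Qed.

Lemma Q_xy k (x y : M) u v : Qk k.+1 x -> Qk k.+1 y -> ~ reach (k.+1 + k.+1) u v ->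
  mmul x y u v = x u v + y u v - one u v.
Proof.
move=> Hx Hy Hn.
case: (classic (u = v)) => [E|Nuv].
  subst v; rewrite mmul_diag; try exact: Q_supp Hx; try exact: Q_supp Hy.
  rewrite (Q_diag _ Hx) (Q_diag _ Hy) mone_eq; ring.
rewrite /mmul (@fsum_list _ _ _ [:: u; v]).
- rewrite !big_cons big_nil (Q_diag _ Hx) (Q_diag _ Hy) mone_neq //; ring.
- constructor; last by constructor; [case|constructor].
  by case=> // E; apply: Nuv.
- move=> z /mulf_nz [H1 H2]; apply: NNPP => Hz; apply: Hn.
  have Nuz : u <> z by move=> E; apply: Hz; left.
  have Nzv : z <> v by move=> E; apply: Hz; right; left.
  exact: (reach_trans Hpo (Q_off Hx Nuz H1) (Q_off Hy Nzv H2)).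
Qed.

Lemma Q_D k (x y : M) : Qk k.+1 x -> Qk k.+1 y ->
  Pk k.+2 (madd (mmul x y) (mscale (-1) (mmul y x))).
Proof.
move=> Hx Hy u v H; apply: NNPP => Hn; apply: H.
have Hn' : ~ reach (k.+1 + k.+1) u v.
  move=> R; apply: Hn; apply: reach_mono R; by rewrite addSn addnS !ltnS leq_addr.
rewrite /madd /mscale (Q_xy Hx Hy Hn') (Q_xy Hy Hx Hn'); ring.
Qed.

Lemma Q_comm k (x y x' y' : M) : Qk k.+1 x -> Qk k.+1 y ->
  inverse_pair le x x' -> inverse_pair le y y' ->
  Qk k.+2 (mmul (mmul (mmul x' y') x) y).
Proof.
move=> Qx Qy [Fx [Fx' [_ Hx]]] [Fy [Fy' [_ Hy]]].
have FP : FI le (mmul x' y') by apply: FI_mmul.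
have E1 : mmul (mmul (mmul x' y') x) y = mmul (mmul x' y') (mmul x y).
  by rewrite mmul_assoc.
have E2 : mmul (mmul x' y') (mmul y x) = one.
  rewrite mmul_assoc //; last by apply: FI_mmul.
  by rewrite -(mmul_assoc Fy' Fy Fx) Hy mmul_1l Hx.
have E3 : madd (mmul (mmul (mmul x' y') x) y) (mscale (-1) one) =
          mmul (mmul x' y') (madd (mmul x y) (mscale (-1) (mmul y x))).
  rewrite mmul_distr // ?E1 ?E2 //; apply: supp_mmul; exact: FI_supp.
move=> u v H; have := madd_neg_nz H; rewrite E3 => H'.
have := Pk_mul (j := 0) (FI_supp FP) (Q_D Qx Qy) H'; by [].
Qed.

Lemma unit_Q n (c : M) : unit_der le n.+1 c -> Qk n.+1 c.
Proof.
elim: n c => [|n IH] c /= Hc.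
- elim: Hc => [|a [x [y [x' [y' [_ [_ [Hx [Hy ->]]]]]]]]|a b _ Ha _ Hb|a b _ Ha Hab].
  + exact: Q_one.
  + exact: Q_comm1 Hx Hy.
  + exact: Q_mul.
  + exact: Q_inv Ha Hab.
- elim: Hc => [|a [x [y [x' [y' [Ux [Uy [Hx [Hy ->]]]]]]]]|a b _ Ha _ Hb|a b _ Ha Hab].
  + exact: Q_one.
  + exact: Q_comm (IH _ Ux) (IH _ Uy) Hx Hy.
  + exact: Q_mul.
  + exact: Q_inv Ha Hab.
Qed.

Lemma bounded_strong : poset_bounded le -> FI_strongly_lie_solvable K le.
Proof.
move/(bounded_noreach Hpo) => [N HN]; exists N => c /slie_Pk Hc.
exact: noreach_zero HN Hc.
Qed.

Lemma strong_lie : FI_strongly_lie_solvable K le -> FI_lie_solvable K le.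
Proof. move=> [n Hn]; exists n => c /lie_slie; exact: Hn. Qed.

Lemma lie_bounded : FI_lie_solvable K le -> poset_bounded le.
Proof.
move=> [n Hn]; apply: NNPP => Hb.
have [i [k R]] := unbounded_reach Hpo Hb (2 ^ n).
have := Hn _ (lie_Em R) => /(congr1 (fun f => f i k)).
rewrite Em_ij /mzero; apply/eqP; exact: oner_neq0.
Qed.

Lemma bounded_PI : poset_bounded le -> FI_PI K le.
Proof.
move/(bounded_noreach Hpo) => [N HN]; exists (fpoly N); split; first exact: fpoly_nonzero.
move=> a Ha; apply: (noreach_zero HN); rewrite -(add0n N).
by apply: fpoly_P => //; apply: supp_P0; exact: supp_mone.
Qed.

Lemma bounded_units : poset_bounded le -> units_solvable K le.
Proof.
move/(bounded_noreach Hpo) => [N HN]; exists N.+1 => c /unit_Q Hc.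
apply: meq => x y; apply: NNPP => H; apply: (HN x y); exact: (reach_down Hpo (Hc x y H)).
Qed.

End Filt.
Section Words.
Variable K : fieldType.
Variable X : Type.
Variable le : X -> X -> Prop.
Hypothesis Hpo : is_poset le.

Local Notation M := (mat K X).
Local Notation one := (@mone K X).
Local Notation lt := (lt le).
Local Notation reach := (reach le).
Local Notation reach_le := (reach_le Hpo).
Local Notation reach_mono := (reach_mono Hpo).
Local Notation reach_split := (reach_split Hpo).
Local Notation reach_lt := (reach_lt Hpo).
Local Notation lt_reach1 := (lt_reach1 Hpo).
Local Notation reach_irr := (reach_irr Hpo).
Local Notation reach_lelt := (reach_lelt Hpo).
Local Notation mmul_diag := (mmul_diag Hpo).
Local Notation supp_mmul := (supp_mmul Hpo).
Local Notation FI_mone := (FI_mone K Hpo).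
Local Notation mmul_distr := (mmul_distr Hpo).
Local Notation mmul_assoc := (mmul_assoc Hpo).
Local Notation FI_mmul := (FI_mmul Hpo).
Local Notation supp_mone := (supp_mone K Hpo).


Local Open Scope nat_scope.
Definition flipl (p : nat * bool) : nat * bool := (p.1, ~~ p.2).
Definition winv (w : seq (nat * bool)) := rev (map flipl w).
Definition rr (p q : nat * bool) : bool := ~~ ((p.1 == q.1) && (p.2 != q.2)).

Lemma flipl_invol p : flipl (flipl p) = p.
Proof. by case: p => i b; rewrite /flipl /= negbK. Qed.

Lemma flipl_inj : injective flipl.
Proof. by move=> p q E; rewrite -(flipl_invol p) E flipl_invol. Qed.

Lemma red_sorted w : reduced_word w = sorted rr w.
Proof. elim: w => [|p t IH] //=; case: t IH => [|q t] //= IH; by rewrite IH. Qed.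

Lemma sorted_winv w : sorted rr w -> sorted rr (winv w).
Proof.
rewrite /winv rev_sorted sorted_map => H.
case: w H => [|p w] //=; rewrite (@eq_path _ _ rr) //.
case=> [i b] [j c]; rewrite /relpre /rr /flipl /=.
by rewrite (eq_sym j i) -(inj_eq negb_inj) !negbK (eq_sym c b).
Qed.

Lemma mem_winv w p : (p \in winv w) = (flipl p \in w).
Proof. by rewrite mem_rev -{1}(flipl_invol p) (mem_map flipl_inj). Qed.

Lemma sorted_cat_j (s1 s2 : seq (nat * bool)) : sorted rr s1 -> sorted rr s2 ->
  (forall a s1' b s2', s1 = a :: s1' -> s2 = b :: s2' -> (last a s1').1 != b.1) ->
  sorted rr (s1 ++ s2).
Proof.
case: s1 => [|a s1'] //= H1 H2 J.
rewrite cat_path H1 /=; case: s2 H2 J => [|b s2'] //= H2 J.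
rewrite H2 andbT /rr; by rewrite (negbTE (J _ _ _ _ erefl erefl)).
Qed.

Fixpoint dw (k off : nat) : seq (nat * bool) :=
  match k with
  | 0 => [:: (off, false)]
  | k'.+1 => winv (dw k' off) ++ winv (dw k' (off + 2 ^ k')) ++ dw k' off ++ dw k' (off + 2 ^ k')
  end.

Lemma dw_nil k off : dw k off <> [::].
Proof.
elim: k off => [|k IH] off //=.
move/(congr1 size); rewrite !size_cat => /eqP; rewrite !addn_eq0 => /and4P [_ _ H _].
by rewrite size_eq0 in H; apply: (IH off); apply/eqP.
Qed.

Lemma dw_vars k off p : p \in dw k off -> (off <= p.1 < off + 2 ^ k)%N.
Proof.
elim: k off p => [|k IH] off p /=.
- by rewrite inE => /eqP -> /=; rewrite leqnn addn1 ltnSn.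
- have B : (off + 2 ^ k + 2 ^ k = off + 2 ^ k.+1)%N by rewrite expnS mul2n -addnn addnA.
  have HA : forall q, q \in dw k off -> (off <= q.1 < off + 2 ^ k.+1)%N.
    move=> q /IH /andP [H1 H2]; rewrite H1 /=; apply: leq_trans H2 _.
    by rewrite -B leq_addr.
  have HB : forall q, q \in dw k (off + 2 ^ k) -> (off <= q.1 < off + 2 ^ k.+1)%N.
    move=> q /IH /andP [H1 H2]; rewrite -B H2 andbT; apply: leq_trans H1; exact: leq_addr.
  rewrite !mem_cat !mem_winv => /or4P [/HA|/HB|/HA|/HB] //.
Qed.

Lemma head_in (s t : seq (nat * bool)) b s2 : s <> [::] -> s ++ t = b :: s2 -> b \in s.
Proof. by case: s => [|a s] //= _ [-> _]; rewrite inE eqxx. Qed.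

Lemma last_in (s : seq (nat * bool)) a s' : s = a :: s' -> last a s' \in s.
Proof. by move=> ->; apply: mem_last. Qed.

Lemma dw_sorted k off : sorted rr (dw k off).
Proof.
elim: k off => [|k IH] off //=.
have VA := @dw_vars k off; have VB := @dw_vars k (off + 2 ^ k).
have DA : forall p q, p \in dw k off -> q \in dw k (off + 2 ^ k) -> p.1 != q.1.
  move=> p q /VA /andP [_ H1] /VB /andP [H2 _]; apply/eqP => E.
  by move: (leq_trans H1 H2); rewrite E ltnn.
have sA := IH off; have sB := IH (off + 2 ^ k).
apply: sorted_cat_j; first exact: sorted_winv.
  apply: sorted_cat_j; first exact: sorted_winv.
    apply: sorted_cat_j => // a s1' b s2' E1 E2.
    apply: DA; [exact: last_in E1| by rewrite E2 inE eqxx].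
  move=> a s1' b s2' E1 E2.
  have Hb := head_in (@dw_nil k off) E2.
  have Ha : last a s1' \in winv (dw k (off + 2 ^ k)) by exact: last_in E1.
  rewrite mem_winv in Ha; rewrite eq_sym; have := DA _ _ Hb Ha; by case: a s1' E1 Ha => ? ? ? /=.
move=> a s1' b s2' E1 E2.
have Hb : b \in winv (dw k (off + 2 ^ k)).
  apply: (head_in _ E2); move=> E; apply: (@dw_nil k (off + 2 ^ k)).
  by move/(congr1 size): E; rewrite /winv size_rev size_map => /eqP; rewrite size_eq0 => /eqP.
have Ha : last a s1' \in winv (dw k off) by exact: last_in E1.
rewrite mem_winv in Ha; rewrite mem_winv in Hb; have := DA _ _ Ha Hb; by [].
Qed.

Section G.
Variables g h : nat -> M.
Hypothesis Hgh : forall i, inverse_pair le (g i) (h i).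

Definition Lt (p : nat * bool) := if p.2 then h p.1 else g p.1.

Lemma FI_Lt p : FI le (Lt p).
Proof. rewrite /Lt; case: p.2; by have [? [? _]] := Hgh p.1. Qed.

Lemma Lt_inv p : mmul (Lt (flipl p)) (Lt p) = one /\ mmul (Lt p) (Lt (flipl p)) = one.
Proof. rewrite /Lt /flipl /=; case: p.2; by have [_ [_ [? ?]]] := Hgh p.1. Qed.

Lemma gwordE w : gword g h w = foldr (fun p acc => mmul (Lt p) acc) one w.
Proof. by []. Qed.

Lemma FI_gword w : FI le (gword g h w).
Proof. elim: w => [|p w IH] /=; [exact: FI_mone| apply: FI_mmul => //; exact: FI_Lt]. Qed.

Lemma gword_cat s1 s2 : gword g h (s1 ++ s2) = mmul (gword g h s1) (gword g h s2).
Proof.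
elim: s1 => [|p s1 IH] /=; first by rewrite mmul_1l.
rewrite IH -mmul_assoc //; [exact: (FI_Lt p)|exact: FI_gword|exact: FI_gword].
Qed.

Lemma gword1 p : gword g h [:: p] = Lt p.
Proof. by rewrite /= mmul_1r. Qed.

Lemma gword_inv w : inverse_pair le (gword g h w) (gword g h (winv w)).
Proof.
split; first exact: FI_gword; split; first exact: FI_gword.
elim: w => [|p w [IH1 IH2]] /=; first by rewrite mmul_1l.
have E : gword g h (winv (p :: w)) = mmul (gword g h (winv w)) (Lt (flipl p)).
  by rewrite /winv /= rev_cons -cats1 gword_cat gword1.
rewrite E; have [L1 L2] := Lt_inv p.
have F1 := FI_gword w; have F2 := FI_gword (winv w); have F3 := FI_Lt p; have F4 := FI_Lt (flipl p).
split.
- rewrite mmul_assoc //; last by apply: FI_mmul.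
  rewrite -(mmul_assoc F1 F2 F4) IH1 mmul_1l //.
- rewrite mmul_assoc //; last by apply: FI_mmul.
  rewrite -(mmul_assoc F4 F3 F1) L1 mmul_1l //.
Qed.

Lemma gword_dw k off : unit_der le k (gword g h (dw k off)).
Proof.
elim: k off => [|k IH] off /=.
- rewrite mmul_1r; exists (h off); exact: Hgh.
- rewrite !gword_cat.
  set x := gword g h (dw k off); set y := gword g h (dw k (off + 2 ^ k)).
  set x' := gword g h (winv (dw k off)); set y' := gword g h (winv (dw k (off + 2 ^ k))).
  have Fx : FI le x := FI_gword _. have Fy : FI le y := FI_gword _.
  have Fx' : FI le x' := FI_gword _. have Fy' : FI le y' := FI_gword _.
  have -> : mmul x' (mmul y' (mmul x y)) = mmul (mmul (mmul x' y') x) y.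
    rewrite !mmul_assoc //; apply: FI_mmul => //.
  apply: gs_base; exists x, y, x', y'; split; first exact: IH.
  split; first exact: IH.
  split; first exact: gword_inv.
  split; first exact: gword_inv.
  by [].
Qed.

End G.

Lemma units_gid : units_solvable K le -> units_group_identity K le.
Proof.
move=> [n Hn]; exists (dw n 0); split; first by apply/eqP; exact: dw_nil.
split; first by rewrite red_sorted dw_sorted.
move=> g h Hgh; apply: Hn; exact: gword_dw.
Qed.

End Words.
Section Ext.
Variable K : fieldType.
Variable X : Type.
Variable le : X -> X -> Prop.
Hypothesis Hpo : is_poset le.

Local Notation M := (mat K X).
Local Notation one := (@mone K X).
Local Notation lt := (lt le).
Local Notation reach := (reach le).
Local Notation reach_le := (reach_le Hpo).
Local Notation reach_mono := (reach_mono Hpo).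
Local Notation reach_split := (reach_split Hpo).
Local Notation reach_lt := (reach_lt Hpo).
Local Notation lt_reach1 := (lt_reach1 Hpo).
Local Notation reach_irr := (reach_irr Hpo).
Local Notation reach_lelt := (reach_lelt Hpo).
Local Notation mmul_diag := (mmul_diag Hpo).
Local Notation supp_mmul := (supp_mmul Hpo).
Local Notation FI_mone := (FI_mone K Hpo).
Local Notation mmul_distr := (mmul_distr Hpo).
Local Notation mmul_assoc := (mmul_assoc Hpo).
Local Notation FI_mmul := (FI_mmul Hpo).
Local Notation supp_mone := (supp_mone K Hpo).


Lemma In_mem (T : eqType) (x : T) s : List.In x s -> x \in s.
Proof. elim: s => [|a s IH] //= [->|H]; rewrite inE ?eqxx //; by rewrite IH ?orbT. Qed.

Lemma mem_In (T : eqType) (x : T) s : x \in s -> List.In x s.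
Proof. elim: s => [|a s IH] //; rewrite inE => /orP [/eqP ->|/IH H]; by [left|right]. Qed.

Lemma uniq_NoDup (T : eqType) (s : seq T) : uniq s -> List.NoDup s.
Proof.
elim: s => [|a s IH] /=; first by constructor.
by move=> /andP [Ha Hs]; constructor; [move/In_mem; apply/negP| apply: IH].
Qed.

Lemma NoDup_map_inj (A B : Type) (f : A -> B) s : injective f -> List.NoDup s ->
  List.NoDup (map f s).
Proof.
move=> Hf; elim: s => [|a s IH] /= H; first by constructor.
inversion H; subst; constructor; last exact: IH.
move/List.in_map_iff => [y [E Hy]]; rewrite (Hf _ _ E) in Hy; by [].
Qed.

Variable n : nat.
Variable c : nat -> X.
Hypothesis Hc : forall k, (k < n)%N -> lt (c k) (c k.+1).

Local Notation MX := 'M[K]_n.+1.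

Lemma c_lt i j : (i < j)%N -> (j <= n)%N -> lt (c i) (c j).
Proof.
elim: j => [|j IH] // Hij Hj.
move: Hij; rewrite ltnS leq_eqVlt => /orP [/eqP ->|Hij]; first exact: Hc.
exact: (le_lt_lt Hpo (IH Hij (ltnW Hj)) (proj1 (Hc Hj))).
Qed.

Lemma c_le i j : (i <= j)%N -> (j <= n)%N -> le (c i) (c j).
Proof.
rewrite leq_eqVlt => /orP [/eqP ->|H] Hj; first exact: le_refl.
exact: proj1 (c_lt H Hj).
Qed.

Lemma c_inj : injective (fun p : 'I_n.+1 => c p).
Proof.
move=> p q E; apply: val_inj => /=.
case: (ltngtP p q) => // H; exfalso.
- by have [_ Hn] := c_lt H (ltnSE (ltn_ord q)); apply: Hn.
- by have [_ Hn] := c_lt H (ltnSE (ltn_ord p)); apply: Hn.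
Qed.

Definition onC x := exists p : 'I_n.+1, c p = x.

Definition idx (x : X) : 'I_n.+1 :=
  match excluded_middle_informative (onC x) with
  | left H => proj1_sig (constructive_indefinite_description _ H)
  | right _ => ord0
  end.

Lemma idx_c (p : 'I_n.+1) : idx (c p) = p.
Proof.
rewrite /idx; case: excluded_middle_informative => [H|H]; last by exfalso; apply: H; exists p.
case: (constructive_indefinite_description _ H) => q /= Hq; exact: c_inj.
Qed.

Definition ext (A : MX) : M := fun x y =>
  if excluded_middle_informative (onC x) then
    (if excluded_middle_informative (onC y) then A (idx x) (idx y) else 0)
  else one x y.

Lemma ext_cc A (p q : 'I_n.+1) : ext A (c p) (c q) = A p q.
Proof.
rewrite /ext; case: excluded_middle_informative => [H0|H]; last by exfalso; apply: H; exists p.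
case: excluded_middle_informative => [H1|H]; last by exfalso; apply: H; exists q.
by rewrite !idx_c.
Qed.

Lemma ext_cn A (p : 'I_n.+1) y : ~ onC y -> ext A (c p) y = 0.
Proof.
move=> Hy; rewrite /ext; case: excluded_middle_informative => [H0|H]; last by exfalso; apply: H; exists p.
by case: excluded_middle_informative.
Qed.

Lemma ext_n A x y : ~ onC x -> ext A x y = one x y.
Proof. by move=> Hx; rewrite /ext; case: excluded_middle_informative. Qed.

Lemma ext_mul_c A (B : M) (p : 'I_n.+1) y :
  mmul (ext A) B (c p) y = \sum_(r < n.+1) A p r * B (c r) y.
Proof.
rewrite /mmul (@fsum_list _ _ _ [seq c r | r : 'I_n.+1 <- index_enum 'I_n.+1]).
- by rewrite big_map; apply: eq_bigr => r _; rewrite ext_cc.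
- apply: (@NoDup_map_inj _ _ (fun r : 'I_n.+1 => c r)); first exact: c_inj.
  apply: uniq_NoDup; exact: index_enum_uniq.
- move=> z /mulf_nz [H1 _].
  case: (classic (onC z)) => [[r <-]|Hz]; last by exfalso; apply: H1; rewrite ext_cn.
  apply: (List.in_map (fun r : 'I_n.+1 => c r)); apply: mem_In; exact: mem_index_enum.
Qed.

Lemma ext_mul_n A (B : M) x y : ~ onC x -> mmul (ext A) B x y = B x y.
Proof.
move=> Hx; rewrite /mmul (@fsum_single _ _ _ x).
- by rewrite ext_n // mone_eq mul1r.
- by move=> z Hz; rewrite ext_n // mone_neq ?mul0r // => E; apply: Hz.
Qed.

Lemma ext_mul A B : mmul (ext A) (ext B) = ext (A *m B).
Proof.
apply: meq => x y.
case: (classic (onC x)) => [[p <-]|Hx]; last by rewrite ext_mul_n // !ext_n.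
rewrite ext_mul_c.
case: (classic (onC y)) => [[q <-]|Hy].
- rewrite ext_cc mxE; apply: eq_bigr => r _; by rewrite ext_cc.
- rewrite ext_cn // big1 // => r _; by rewrite ext_cn ?mulr0.
Qed.

Lemma ext_1 : ext 1%:M = one.
Proof.
apply: meq => x y.
case: (classic (onC x)) => [[p <-]|Hx]; last by rewrite ext_n.
case: (classic (onC y)) => [[q <-]|Hy].
- rewrite ext_cc mxE; case: eqVneq => [->|Npq]; first by rewrite mone_eq.
  by rewrite mone_neq // => /c_inj E; rewrite E eqxx in Npq.
- rewrite ext_cn // mone_neq // => E; apply: Hy; by exists p.
Qed.

Definition upper (A : MX) := forall p q : 'I_n.+1, A p q != 0 -> (p <= q)%N.

Lemma FI_ext A : upper A -> FI le (ext A).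
Proof.
move=> HA; split.
- move=> x y Hl; apply: NNPP => H; apply: Hl.
  case: (classic (onC x)) => [[p Ep]|Hx]; last first.
    rewrite ext_n // in H; rewrite (mone_nz H); exact: le_refl.
  subst x; case: (classic (onC y)) => [[q Eq]|Hy]; last by rewrite ext_cn in H.
  subst y.
  rewrite ext_cc in H; apply: c_le; [exact: HA (introN eqP H)| exact: ltnSE (ltn_ord q)].
- move=> x y _.
  pose L := [seq c r | r : 'I_n.+1 <- index_enum 'I_n.+1].
  exists (List.list_prod L L) => u v _ [_ Nuv] _ H.
  have Hu : onC u.
    apply: NNPP => Hu; apply: H; by rewrite ext_n // mone_neq.
  case: Hu H => p <- H.
  have Hv : onC v by apply: NNPP => Hv; apply: H; rewrite ext_cn.
  case: Hv H => q <- H.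
  apply: List.in_prod; apply: (List.in_map (fun r : 'I_n.+1 => c r)); apply: mem_In;
    exact: mem_index_enum.
Qed.

Lemma inv_ext A B : upper A -> upper B -> A *m B = 1%:M -> B *m A = 1%:M ->
  inverse_pair le (ext A) (ext B).
Proof.
move=> UA UB E1 E2; split; first exact: FI_ext.
split; first exact: FI_ext.
by rewrite !ext_mul E1 E2 ext_1.
Qed.

Lemma upper_mul (A B : MX) : upper A -> upper B -> upper (A *m B).
Proof.
move=> UA UB p q; rewrite mxE => H.
have [r [_ Hr]] : exists r, List.In r (index_enum 'I_n.+1) /\ A p r * B r q <> 0.
  apply: sum_nz_seq; exact/eqP.
have [H1 H2] := mulf_nz Hr.
exact: leq_trans (UA _ _ (introN eqP H1)) (UB _ _ (introN eqP H2)).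
Qed.

Lemma sum_single (F : 'I_n.+1 -> K) t0 : (forall t, t != t0 -> F t = 0) ->
  \sum_t F t = F t0.
Proof.
move=> H; rewrite (bigD1 t0) //= big1 ?addr0 // => t Ht; exact: H.
Qed.

End Ext.
Section PIB.
Variable K : fieldType.
Variable X : Type.
Variable le : X -> X -> Prop.
Hypothesis Hpo : is_poset le.

Local Notation M := (mat K X).
Local Notation one := (@mone K X).
Local Notation lt := (lt le).
Local Notation reach := (reach le).
Local Notation reach_le := (reach_le Hpo).
Local Notation reach_mono := (reach_mono Hpo).
Local Notation reach_split := (reach_split Hpo).
Local Notation reach_lt := (reach_lt Hpo).
Local Notation lt_reach1 := (lt_reach1 Hpo).
Local Notation reach_irr := (reach_irr Hpo).
Local Notation reach_lelt := (reach_lelt Hpo).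
Local Notation mmul_diag := (mmul_diag Hpo).
Local Notation supp_mmul := (supp_mmul Hpo).
Local Notation FI_mone := (FI_mone K Hpo).
Local Notation mmul_distr := (mmul_distr Hpo).
Local Notation mmul_assoc := (mmul_assoc Hpo).
Local Notation FI_mmul := (FI_mmul Hpo).
Local Notation supp_mone := (supp_mone K Hpo).


Lemma inord_eq m j : (j <= m)%N -> (@inord m j == ord_max) = (j == m).
Proof. by move=> Hj; rewrite -val_eqE /= inordK. Qed.

Lemma PI_bounded : FI_PI K le -> poset_bounded le.
Proof.
move=> [f [Hf Hid]]; apply: NNPP => Hb.
case: f Hf Hid => [|[c0 w0] f'] Hf Hid; first by case/and3P: Hf.
pose m := size w0.
have [x [y R]] := unbounded_reach Hpo Hb m.
have [c [_ Hc]] := reach_fun R.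
pose A (i : nat) : 'M[K]_m.+1 :=
  \matrix_(r, s) (((s : nat) == r.+1) && (nth 0%N w0 r == i))%:R.
have UA : forall i, upper (A i).
  move=> i p q; rewrite mxE; case: (eqVneq (q : nat) p.+1) => [->|E]; first by move=> _; exact: leqnSn.
  by rewrite /= eqxx.
pose a i := ext c (A i).
have FA : forall i, FI le (a i) by move=> i; exact: (FI_ext Hpo Hc (UA i)).
pose mprod (w : seq nat) := foldr (fun i acc => A i *m acc) 1%:M w.
have Hmw : forall w, mword a w = ext c (mprod w).
  elim => [|i w IH] /=; first by rewrite (ext_1 K Hpo Hc).
  by rewrite /mword /= -/(mword a w) IH /a (ext_mul Hpo Hc).
have corner : forall w j, (j <= m)%N -> mprod w (inord j) ord_max = (w == drop j w0)%:R.
  elim => [|i w IH] j Hj /=.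
  - rewrite mxE inord_eq // [[::] == _]eq_sym -size_eq0 size_drop subn_eq0 eqn_leq Hj //.
  - rewrite mxE; case: (ltnP j m) => Hjm.
    + rewrite (@sum_single _ _ _ (inord j.+1)).
      * rewrite !mxE !inordK ?ltnS ?(ltnW Hjm) // eqxx /= IH //.
        rewrite (drop_nth 0%N Hjm) eqseq_cons eq_sym -natrM mulnb //.
      * move=> t Ht; rewrite mxE; case: eqP => [E|]; last by rewrite mul0r.
        exfalso; move/eqP: Ht; apply; apply: val_inj; by rewrite /= E !inordK // ltnS ltnW.
    + have Ejm : j = m by apply/eqP; rewrite eqn_leq Hj Hjm.
      subst j; rewrite drop_oversize // big1 // => t _; rewrite mxE inordK //.
      case: eqP => [E|]; last by rewrite mul0r.
      by move: (ltn_ord t); rewrite E ltnn.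
have Eval : forall g : seq (K * seq nat),
    ncpoly_eval g a (c 0%N) (c m) = \sum_(p <- g) p.1 * (p.2 == w0)%:R.
  elim => [|p g IH]; first by rewrite big_nil.
  rewrite /= /madd /mscale IH big_cons Hmw.
  have E0 : c 0%N = c (@inord m 0) by rewrite inordK.
  have Em : c m = c (@ord_max m) by [].
  rewrite E0 Em (ext_cc Hpo Hc) corner // drop0 //.
have := congr1 (fun F => F (c 0%N) (c m)) (Hid a FA).
rewrite Eval big_cons eqxx mulr1 big1_seq /mzero ?addr0; last first.
  move=> p Hp; case/and3P: Hf => _ /= /andP [Hu _] _.
  case: eqP => [E|]; last by rewrite mulr0.
  by exfalso; move/negP: Hu; apply; rewrite -E; apply: map_f.
move=> E; case/and3P: Hf => _ _ /= /andP [/eqP Hc0 _]; exact: Hc0.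
Qed.

End PIB.
Section GIB.
Variable K : fieldType.
Variable X : Type.
Variable le : X -> X -> Prop.
Hypothesis Hpo : is_poset le.

Local Notation M := (mat K X).
Local Notation one := (@mone K X).
Local Notation lt := (lt le).
Local Notation reach := (reach le).
Local Notation reach_le := (reach_le Hpo).
Local Notation reach_mono := (reach_mono Hpo).
Local Notation reach_split := (reach_split Hpo).
Local Notation reach_lt := (reach_lt Hpo).
Local Notation lt_reach1 := (lt_reach1 Hpo).
Local Notation reach_irr := (reach_irr Hpo).
Local Notation reach_lelt := (reach_lelt Hpo).
Local Notation mmul_diag := (mmul_diag Hpo).
Local Notation supp_mmul := (supp_mmul Hpo).
Local Notation FI_mone := (FI_mone K Hpo).
Local Notation mmul_distr := (mmul_distr Hpo).
Local Notation mmul_assoc := (mmul_assoc Hpo).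
Local Notation FI_mmul := (FI_mmul Hpo).
Local Notation supp_mone := (supp_mone K Hpo).


Lemma half_double_S k : (k.*2.+1)./2 = k.
Proof. by rewrite /= uphalf_double. Qed.

Lemma split_parity r : (exists k, r = k.*2) \/ (exists k, r = k.*2.+1).
Proof.
have E := odd_double_half r; case: (odd r) E => /= E.
- by right; exists r./2; rewrite -{1}E add1n.
- by left; exists r./2; rewrite -{1}E add0n.
Qed.

Section W.
Variable w : seq (nat * bool).
Hypothesis Hw : w != [::].
Hypothesis Hr : reduced_word w.
Let L := size w.
Let m := L.*2.
Variable c : nat -> X.
Hypothesis Hc : forall k, (k < m)%N -> lt (c k) (c k.+1).

Definition gen (t : nat) : nat * bool :=
  if odd t then flipl (nth (0%N, false) w t./2) else nth (0%N, false) w t./2.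

Lemma gen_even k : gen k.*2 = nth (0%N, false) w k.
Proof. by rewrite /gen odd_double doubleK. Qed.

Lemma gen_odd k : gen k.*2.+1 = flipl (nth (0%N, false) w k).
Proof.
rewrite /gen; have -> : odd k.*2.+1 = true by rewrite /= odd_double.
by rewrite half_double_S.
Qed.

Lemma flipl_neq p : flipl p != p.
Proof. by case: p => i b; rewrite /flipl -pair_eqE /= eqxx /=; case: b. Qed.

Lemma gen_neq r : (r.+1 < m)%N -> gen r != gen r.+1.
Proof.
case: (split_parity r) => [[k ->]|[k ->]] H.
- by rewrite gen_even gen_odd eq_sym flipl_neq.
- rewrite gen_odd -doubleS gen_even.
  have Hk : (k.+1 < L)%N by rewrite -ltn_double doubleS.
  have Hs : sorted rr w by rewrite -red_sorted.
  move/(sortedP (0%N, false)): Hs => Hs.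
  have := Hs k Hk; rewrite /rr; apply: contra => /eqP <-.
  by rewrite /flipl /= eqxx /=; case: (_.2).
Qed.

Local Notation MX := 'M[K]_m.+1.

Definition Nm (g : nat * bool) : MX :=
  \matrix_(r, s) (((s : nat) == r.+1) && (gen r == g))%:R.

Lemma Nm_nz g (r s : 'I_m.+1) : Nm g r s != 0 -> (s : nat) = r.+1 /\ gen r = g.
Proof.
rewrite mxE; case: (eqVneq (s : nat) r.+1) => [E|E] /=; last by rewrite eqxx.
by case: (eqVneq (gen r) g) => [E'|E'] /=; last by rewrite eqxx.
Qed.

Lemma NN g : Nm g *m Nm g = 0.
Proof.
apply/matrixP => r s; rewrite !mxE big1 // => t _.
case: (eqVneq (Nm g r t) 0) => [->|/Nm_nz [E1 E2]]; first by rewrite mul0r.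
case: (eqVneq (Nm g t s) 0) => [->|/Nm_nz [E3 E4]]; first by rewrite mulr0.
have Hm : (r.+1 < m)%N by move: (ltn_ord s); rewrite E3 E1.
exfalso; move/negP: (gen_neq Hm); apply; by rewrite -E1 E2 E4.
Qed.

Definition Lmat (l : nat * bool) : MX := (1%:M + Nm l) *m (1%:M - Nm (flipl l)).

Lemma ipm (N : MX) : N *m N = 0 -> (1%:M + N) *m (1%:M - N) = 1%:M /\ (1%:M - N) *m (1%:M + N) = 1%:M.
Proof.
move=> H; rewrite !mulmxE in H *; split.
- by rewrite mulrDl mul1r mulrBr mulr1 H subr0 subrK.
- by rewrite mulrBl mul1r mulrDr mulr1 H addr0 addrK.
Qed.

Lemma Lmat_inv l : Lmat l *m Lmat (flipl l) = 1%:M.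
Proof.
rewrite /Lmat flipl_invol.
have [A1 _] := ipm (NN l); have [_ A2] := ipm (NN (flipl l)).
rewrite !mulmxE in A1 A2 *.
by rewrite mulrA -(mulrA (1%:M + Nm l)) A2 mulr1 A1.
Qed.

Lemma upper_1 : upper (1%:M : MX).
Proof.
move=> p q; rewrite mxE; case: (eqVneq p q) => [->|E]; first by rewrite leqnn.
by rewrite mulr0n eqxx.
Qed.

Lemma upper_add (A B : MX) : upper A -> upper B -> upper (A + B).
Proof.
move=> UA UB p q; rewrite mxE; case: (eqVneq (A p q) 0) => [->|/UA //].
by rewrite add0r => /UB.
Qed.

Lemma upper_opp (A : MX) : upper A -> upper (- A).
Proof. by move=> UA p q; rewrite mxE oppr_eq0 => /UA. Qed.

Lemma upper_Nm g : upper (Nm g).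
Proof. by move=> p q /Nm_nz [-> _]; exact: leqnSn. Qed.

Lemma upper_Lmat l : upper (Lmat l).
Proof.
apply: upper_mul; [apply: upper_add|apply: upper_add; last apply: upper_opp];
  (exact: upper_1 || exact: upper_Nm).
Qed.

Definition bandM d (A : MX) := forall r s : 'I_m.+1, A r s != 0 -> (s <= r + d)%N.

Lemma band_mul d1 d2 (A B : MX) : bandM d1 A -> bandM d2 B -> bandM (d1 + d2) (A *m B).
Proof.
move=> BA BB p q; rewrite mxE => H.
have [r [_ Hr0]] : exists r, List.In r (index_enum 'I_m.+1) /\ A p r * B r q <> 0.
  apply: sum_nz_seq; exact/eqP.
have [H1 H2] := mulf_nz Hr0.
apply: leq_trans (BB _ _ (introN eqP H2)) _; rewrite addnA leq_add2r.
exact: BA (introN eqP H1).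
Qed.

Lemma band_add d (A B : MX) : bandM d A -> bandM d B -> bandM d (A + B).
Proof.
move=> UA UB p q; rewrite mxE; case: (eqVneq (A p q) 0) => [->|/UA //].
by rewrite add0r => /UB.
Qed.

Lemma band_opp d (A : MX) : bandM d A -> bandM d (- A).
Proof. by move=> UA p q; rewrite mxE oppr_eq0 => /UA. Qed.

Lemma band_1 : bandM 1 (1%:M : MX).
Proof.
move=> p q; rewrite mxE; case: (eqVneq p q) => [->|E]; first by rewrite leq_addr.
by rewrite mulr0n eqxx.
Qed.

Lemma band_Nm g : bandM 1 (Nm g).
Proof. by move=> p q /Nm_nz [-> _]; rewrite addn1. Qed.

Lemma band_Lmat l : bandM 2 (Lmat l).
Proof.
apply: (@band_mul 1 1); [apply: band_add|apply: band_add; last apply: band_opp];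
  (exact: band_1 || exact: band_Nm).
Qed.

Definition Gg i := ext c (Lmat (i, false)).
Definition Hh i := ext c (Lmat (i, true)).

Lemma Hgh i : inverse_pair le (Gg i) (Hh i).
Proof.
apply: (inv_ext Hpo Hc); try exact: upper_Lmat.
- exact: (Lmat_inv (i, false)).
- exact: (Lmat_inv (i, true)).
Qed.

Definition mw (s : seq (nat * bool)) : MX := foldr (fun l acc => Lmat l *m acc) 1%:M s.

Lemma gword_mw s : gword Gg Hh s = ext c (mw s).
Proof.
elim: s => [|[i b] s IH] /=; first by rewrite (ext_1 K Hpo Hc).
rewrite /gword /= -/(gword Gg Hh s) IH -(ext_mul Hpo Hc).
by case: b.
Qed.

Lemma ent1 (r s : nat) : (r <= m)%N -> (s <= m)%N ->
  (1%:M : MX) (inord r) (inord s) = (r == s)%:R.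
Proof. by move=> Hr1 Hs1; rewrite mxE -val_eqE /= !inordK. Qed.

Lemma entN g (r s : nat) : (r <= m)%N -> (s <= m)%N ->
  Nm g (inord r) (inord s) = ((s == r.+1) && (gen r == g))%:R.
Proof. by move=> Hr1 Hs1; rewrite mxE !inordK. Qed.

Lemma Lmat_corner k : (k < L)%N ->
  Lmat (nth (0%N, false) w k) (inord k.*2) (inord k.*2.+2) = -1.
Proof.
move=> Hk.
have B2 : (k.*2.+2 <= m)%N by rewrite -doubleS leq_double.
have B1 : (k.*2.+1 <= m)%N by apply: ltnW.
have B0 : (k.*2 <= m)%N by apply: ltnW.
have I0 : (k.*2 < m.+1)%N by rewrite ltnS.
have I1 : (k.*2.+1 < m.+1)%N by rewrite ltnS.
have I2 : (k.*2.+2 < m.+1)%N by rewrite ltnS.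
rewrite mxE (@sum_single _ _ _ (inord k.*2.+1)).
- rewrite !mxE -!val_eqE /= !inordK // gen_even gen_odd !eqxx /=.
  by rewrite !(ltn_eqF (ltnSn _)) /= add0r sub0r mul1r.
- move=> t Ht.
  have Ht' : (t : nat) != k.*2.+1.
    by apply: contra Ht => /eqP E; apply/eqP; apply: val_inj; rewrite /= inordK.
  rewrite !mxE -!val_eqE /= !inordK // (negbTE Ht') /= addr0.
  case: (eqVneq k.*2 t) => [E|N]; last by rewrite mul0r.
  have E' : val t = k.*2 by rewrite E.
  rewrite ?E' -?E (ltn_eqF (leqnSn k.*2.+1)) (gtn_eqF (ltnSn k.*2.+1)) /=.
  by rewrite subrr mulr0.
Qed.

Lemma corner d : forall k, (k + d)%N = L -> forall r, (r <= k.*2)%N ->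
  mw (drop k w) (inord r) ord_max = (r == k.*2)%:R * (-1) ^+ d.
Proof.
elim: d => [|d IH] k Hkd r Hr2.
- rewrite addn0 in Hkd; rewrite Hkd /L drop_size /= expr0 mulr1 mxE inord_eq //.
  by apply: leq_trans Hr2 _; rewrite Hkd.
have Hk : (k < L)%N by rewrite -Hkd addnS ltnS leq_addr.
have IH' := IH k.+1 (etrans (addSnnS k d) Hkd).
have Bk : (k.*2.+2 <= m)%N by rewrite -doubleS leq_double.
rewrite (drop_nth (0%N, false) Hk) /= mxE (@sum_single _ _ _ (inord k.*2.+2)).
- rewrite IH' ?doubleS // eqxx mul1r.
  case: (eqVneq r k.*2) => [->|Nr]; first by rewrite Lmat_corner // exprS !mul1r.
  case: (eqVneq (Lmat (nth (0%N, false) w k) (inord r) (inord k.*2.+2)) 0) => [->|/band_Lmat H].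
    by rewrite !mul0r.
  exfalso; move: H; rewrite !inordK ?ltnS //; last by apply: leq_trans Hr2 (ltnW (ltnW Bk)).
  rewrite addn2 !ltnS => H; move/negP: Nr; apply; by rewrite eqn_leq Hr2 H.
- move=> t Ht.
  case: (leqP t k.*2.+2) => Htle.
  + rewrite -[t]inord_val (IH' t) ?doubleS // inord_val.
    have -> : ((t : nat) == k.*2.+2) = false.
      apply/negP => /eqP E; move/eqP: Ht; apply; apply: val_inj; by rewrite /= inordK // ltnS.
    by rewrite mul0r mulr0.
  + case: (eqVneq (Lmat (nth (0%N, false) w k) (inord r) t) 0) => [->|/band_Lmat H].
      by rewrite mul0r.
    exfalso; move: H; rewrite inordK; last by rewrite ltnS; apply: leq_trans Hr2 (ltnW (ltnW Bk)).
    rewrite addn2 => H; move: (leq_trans H (Hr2 : (r.+2 <= k.*2.+2)%N)).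
    by rewrite leqNgt Htle.
Qed.

Lemma W_contra : gword Gg Hh w <> one.
Proof.
rewrite gword_mw => E.
have Hm : (0 < m)%N by rewrite /m double_gt0 lt0n size_eq0.
have := congr1 (fun F => F (c 0%N) (c m)) E.
have E0 : c 0%N = c (@inord m 0) by rewrite inordK.
have Em : c m = c (@ord_max m) by [].
have C := @corner L 0 (add0n L) 0 (leq0n _); rewrite drop0 in C.
rewrite {1}E0 {1}Em (ext_cc Hpo Hc) C eqxx mul1r mone_neq.
- by move/eqP; rewrite expf_eq0 oppr_eq0 oner_eq0 andbF.
- rewrite E0 Em => /(c_inj Hpo Hc) /(congr1 val); rewrite /= inordK //.
  by move=> E'; rewrite -E' in Hm.
Qed.

End W.

Lemma gid_bounded : units_group_identity K le -> poset_bounded le.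
Proof.
move=> [w [Hw [Hr Hid]]]; apply: NNPP => Hb.
have [x [y R]] := unbounded_reach Hpo Hb (size w).*2.
have [c [_ Hc]] := reach_fun R.
apply: (W_contra Hw Hc); apply: Hid => i; exact: (Hgh Hr Hc i).
Qed.

End GIB.

Theorem theorem1p3 (K : fieldType) (X : Type) (le : X -> X -> Prop) :
  is_poset le ->
  [<-> FI_PI K le;
       FI_lie_solvable K le;
       FI_strongly_lie_solvable K le;
       units_group_identity K le;
       units_solvable K le;
       poset_bounded le].
Proof.
move=> Hpo.
have b1 := @bounded_PI K X le Hpo.
have b3 := @bounded_strong K X le Hpo.
have b5 := @bounded_units K X le Hpo.
have a1 := @PI_bounded K X le Hpo.
have a2 := @lie_bounded K X le Hpo.
have a4 := @gid_bounded K X le Hpo.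
have s32 := @strong_lie K X le Hpo.
have u54 := @units_gid K X le Hpo.
tfae.
- by move/a1/b3/s32.
- by move/a2/b3.
- by move/s32/a2/b5/u54.
- by move/a4/b5.
- by move/u54/a4.
- exact: b1.
Qed.
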